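(* Let $k\ge 2$ be an integer and let $E=(C,V)$ be a $k$-Party election such that both $|C|$ and $|V|$ are divisible by $k$. Then $\mathrm{pcc\text{-}agr}(E)=0$ and $\mathrm{pcc^+\text{-}agr}(E)=1/k$.
   Context: An (approval) election is a pair $E=(C,V)$ with candidate set $C$ and a collection of voters $V$; each vote is a binary vector indicating which candidates the voter approves. A $k$-Party election (with $|C|,|V|$ divisible by $k$) is one where $C$ is partitioned into $k$ disjoint groups $C_1,\dots,C_k$ of equal size and $V$ into $k$ disjoint groups $V_1,\dots,V_k$ of equal size, and for each $i\in[k]$ every voter in $V_i$ approves exactly the candidates in $C_i$. Pearson correlation of $x,y\in\mathbb{R}^t$: $\mathrm{pcc}(x,y)=\frac{\sum_i(x[i]-\overline{x})(y[i]-\overline{y})}{\sqrt{\sum_i(x[i]-\overline{x})^2}\sqrt{\sum_i(y[i]-\overline{y})^2}}$ (set to $1$ if $x$ or $y$ is constant). $\mathrm{pcc\text{-}agr}(E)=\frac{1}{|V|^2}\sum_{u\in V}\sum_{v\in V}\mathrm{pcc}(u,v)$ and $\mathrm{pcc^+\text{-}agr}(E)=\frac{1}{|V|^2}\sum_{u\in V}\sum_{v\in V}\max(0,\mathrm{pcc}(u,v))$, summing over all ordered pairs including $u=v$. *)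

(* Defs.v *)
From HB Require Import structures.
From mathcomp Require Import all_boot all_order all_algebra.
Set Implicit Arguments. Unset Strict Implicit. Unset Printing Implicit Defensive.
Import Order.TTheory GRing.Theory Num.Theory.
Local Open Scope ring_scope.

(* An approval election with candidate set 'I_m and voters indexed by 'I_n:
   E v c = true iff voter v approves candidate c. *)
Definition election (m n : nat) := 'I_n -> 'I_m -> bool.

Definition vote_vec (R : rcfType) (m n : nat) (E : election m n) (v : 'I_n)
  : 'I_m -> R := fun c => (E v c)%:R.

Definition mean (R : rcfType) (t : nat) (x : 'I_t -> R) : R :=
  (\sum_(i < t) x i) / t%:R.

Definition is_constant (R : rcfType) (t : nat) (x : 'I_t -> R) : bool :=
  [forall i, forall j, x i == x j].

(* Pearson correlation coefficient, set to 1 if x or y is constant. *)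
Definition pcc (R : rcfType) (t : nat) (x y : 'I_t -> R) : R :=
  if is_constant x || is_constant y then 1
  else (\sum_(i < t) (x i - mean x) * (y i - mean y)) /
       (Num.sqrt (\sum_(i < t) (x i - mean x) ^+ 2) *
        Num.sqrt (\sum_(i < t) (y i - mean y) ^+ 2)).

(* pcc-agr: average over all ordered pairs (u, v), including u = v. *)
Definition pcc_agr (R : rcfType) (m n : nat) (E : election m n) : R :=
  (\sum_(u < n) \sum_(v < n) pcc (vote_vec R E u) (vote_vec R E v)) / (n ^ 2)%:R.

Definition pccp_agr (R : rcfType) (m n : nat) (E : election m n) : R :=
  (\sum_(u < n) \sum_(v < n) Num.max 0 (pcc (vote_vec R E u) (vote_vec R E v)))
    / (n ^ 2)%:R.

(* k-Party election: candidates partitioned into k groups of equal size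
   (group map gc), voters partitioned into k groups of equal size (gv), and
   each voter of group i approves exactly the candidates of group i. *)
Definition k_party (k m n : nat) (E : election m n) : Prop :=
  exists (gc : 'I_m -> 'I_k) (gv : 'I_n -> 'I_k),
    [/\ forall i j : 'I_k, #|[set c | gc c == i]| = #|[set c | gc c == j]|,
        forall i j : 'I_k, #|[set v | gv v == i]| = #|[set v | gv v == j]|
      & forall v c, E v c = (gc c == gv v)].

(* Main.v *)
Require Import Defs.
From HB Require Import structures.
From mathcomp Require Import all_boot all_order all_algebra.
From mathcomp Require Import ring lra.
Import Order.TTheory GRing.Theory Num.Theory.
Local Open Scope ring_scope.

Lemma sum_ind (R : rcfType) (T : finType) k (g : T -> 'I_k) i :
  \sum_(c : T) ((g c == i)%:R : R) = (#|[set c | g c == i]|)%:R.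
Proof.
rewrite -natr_sum; congr (_%:R); rewrite -sum1_card [RHS]big_mkcond /=.
by apply: eq_bigr => c _; rewrite inE; case: (g c == i).
Qed.

Lemma card_groups (T : finType) k (g : T -> 'I_k) s :
  (forall i, #|[set c | g c == i]| = s) -> #|T| = (k * s)%N.
Proof.
move=> hs; rewrite -sum1_card (partition_big g predT) //=.
rewrite -[k in (k * _)%N]card_ord -sum_nat_const; apply: eq_bigr => i _.
rewrite -(hs i) -sum1_card; apply: eq_bigl => c; by rewrite inE.
Qed.

Lemma pcc_party (R : rcfType) m k (gc : 'I_m -> 'I_k) s (x y : 'I_m -> R) a b :
  (1 < k)%N -> (0 < s)%N -> (forall i, #|[set c | gc c == i]| = s) ->
  (forall c, x c = (gc c == a)%:R) -> (forall c, y c = (gc c == b)%:R) ->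
  pcc x y = if a == b then 1 else - (k%:R - 1)^-1.
Proof.
move=> hk hs hc hx hy.
have hm : m = (k * s)%N by rewrite -(@card_groups _ _ _ _ hc) card_ord.
have kR : (k%:R : R) != 0 by rewrite pnatr_eq0 -lt0n; apply: ltnW.
have sR : (s%:R : R) != 0 by rewrite pnatr_eq0 -lt0n.
have k1R : (k%:R - 1 : R) != 0.
  by rewrite subr_eq0 (_ : 1 = 1%:R) // eqr_nat neq_ltn hk orbT.
have hsum : forall (z : 'I_m -> R) i, (forall c, z c = (gc c == i)%:R) ->
    \sum_c z c = s%:R.
  by move=> z i hz; rewrite (eq_bigr _ (fun c _ => hz c)) sum_ind hc.
have hmean : forall (z : 'I_m -> R) i, (forall c, z c = (gc c == i)%:R) ->
    mean z = k%:R^-1.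
  move=> z i hz; rewrite /mean (hsum z i hz) hm natrM; field; by apply/andP.
have hnc : forall (z : 'I_m -> R) i, (forall c, z c = (gc c == i)%:R) ->
    ~~ is_constant z.
  move=> z i hz; apply/negP => /forallP hcst.
  have [c0 hc0] : exists c0, gc c0 == i.
    apply/existsP; rewrite -(negbK [exists _, _]) negb_exists; apply/negP.
    move/forallP=> hn; move: (hc i); rewrite (_ : [set c | gc c == i] = set0).
      by rewrite cards0 => h; move: hs; rewrite -h.
    by apply/setP => c; rewrite inE in_set0; apply/negbTE/hn.
  have [c1 hc1] : exists c1, gc c1 != i.
    apply/existsP; rewrite -(negbK [exists _, _]) negb_exists; apply/negP.
    move/forallP=> hn; move: (hc i); rewrite (_ : [set c | gc c == i] = setT).
      rewrite cardsT card_ord hm => h.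
      by move: hk; rewrite -{2}(mul1n s) in h; move/eqP: h; rewrite eqn_mul2r eqn0Ngt hs /= => /eqP ->.
    by apply/setP => c; rewrite inE in_setT; apply/negPn/hn.
  move: (hcst c0) => /forallP /(_ c1) /eqP; rewrite !hz hc0 (negbTE hc1) /=.
  by move/eqP; rewrite oner_eq0.
have hcov : forall (z w : 'I_m -> R) i j, (forall c, z c = (gc c == i)%:R) ->
    (forall c, w c = (gc c == j)%:R) ->
    \sum_c (z c - mean z) * (w c - mean w) = (i == j)%:R * s%:R - s%:R / k%:R.
  move=> z w i j hz hw; rewrite (hmean z i hz) (hmean w j hw).
  have -> : \sum_c (z c - k%:R^-1) * (w c - k%:R^-1) =
     \sum_c ((i == j)%:R * z c) - k%:R^-1 * \sum_c z c - k%:R^-1 * \sum_c w c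
       + \sum_(c : 'I_m) k%:R^-2.
    rewrite !mulr_sumr -!sumrB -big_split /=; apply: eq_bigr => c _.
    have key : (gc c == i)%:R * (gc c == j)%:R = (i == j)%:R * (gc c == i)%:R :> R.
      case hi: (gc c == i); last by rewrite mul0r mulr0.
      by move/eqP: hi => hi; rewrite hi mul1r mulr1.
    rewrite hz hw -key; field; exact: kR.
  rewrite sumr_const card_ord -mulr_sumr (hsum z i hz) (hsum w j hw) -(mulr_natr (k%:R ^- 2) m) hm natrM
    ; field; exact: kR.
have hc0 : (0 : R) <= 1 * s%:R - s%:R / k%:R.
  rewrite subr_ge0 mul1r ler_pdivrMr ?ltr0n ?(ltnW hk) //.
  by rewrite ler_peMr ?ler0n // ler1n ltnW.
rewrite /pcc (negbTE (hnc x a hx)) (negbTE (hnc y b hy)) /=.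
rewrite (hcov x y a b hx hy) (hcov x x a a hx hx) (hcov y y b b hy hy) !eqxx.
rewrite -expr2 sqr_sqrtr //.
have hc1 : (1 * s%:R - s%:R / k%:R : R) != 0.
  rewrite mul1r subr_eq0; apply/eqP => h; move: k1R; rewrite (_ : k%:R = 1 :> R) ?subrr ?eqxx //.
  apply: (mulfI sR); rewrite mulr1 {1}h; field; exact: kR.
case: (a == b); first by rewrite divff.
rewrite mul0r sub0r; apply: (mulfI hc1); rewrite mulrC divfK //. field.
by rewrite k1R kR.
Qed.

Theorem proposition5 (R : rcfType) (k m n : nat) (E : election m n) :
  (2 <= k)%N -> (0 < m)%N -> (0 < n)%N -> (k %| m)%N -> (k %| n)%N ->
  k_party k E ->
  pcc_agr R E = 0 /\ pccp_agr R E = 1 / k%:R.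
Proof.
move=> hk hm0 hn0 _ _ [gc [gv [hc hv hE]]].
have k0 : 'I_k by rewrite -(subnKC hk); exact: ord0.
set s := #|[set c | gc c == k0]|; set t := #|[set v | gv v == k0]|.
have hcs : forall i, #|[set c | gc c == i]| = s by move=> i; exact: hc i k0.
have hvt : forall i, #|[set v | gv v == i]| = t by move=> i; exact: hv i k0.
have hn := @card_groups _ _ _ _ hvt; rewrite card_ord in hn.
have hm := @card_groups _ _ _ _ hcs; rewrite card_ord in hm.
have hs : (0 < s)%N by move: hm0; rewrite hm muln_gt0 => /andP[].
have ht : (0 < t)%N by move: hn0; rewrite hn muln_gt0 => /andP[].
have hk1 : (1 < k)%N by [].
have kR : (k%:R : R) != 0 by rewrite pnatr_eq0 -lt0n; apply: ltnW.
have tR : (t%:R : R) != 0 by rewrite pnatr_eq0 -lt0n.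
have k1R : (k%:R - 1 : R) != 0.
  by rewrite subr_eq0 (_ : 1 = 1%:R) // eqr_nat neq_ltn hk orbT.
have hp : forall u v, pcc (vote_vec R E u) (vote_vec R E v) =
    if gv u == gv v then 1 else - (k%:R - 1)^-1.
  move=> u v; apply: (@pcc_party R _ _ gc _ _ _ _ _ hk1 hs hcs) => c; by rewrite /vote_vec hE.
have hpos : (0 : R) < (k%:R - 1)^-1.
  by rewrite invr_gt0 subr_gt0 (_ : 1 = 1%:R) // ltr_nat.
split.
- rewrite /pcc_agr (eq_bigr (fun u => n%:R * (- (k%:R - 1)^-1) +
      (1 + (k%:R - 1)^-1) * t%:R)).
    rewrite sumr_const card_ord -mulr_natr hn natrX natrM; field.
    by rewrite k1R kR tR.
  move=> u _.
  rewrite (eq_bigr (fun v => - (k%:R - 1)^-1 + (1 + (k%:R - 1)^-1) * (gv v == gv u)%:R)).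
    by rewrite big_split /= sumr_const card_ord -mulr_sumr sum_ind hvt mulr_natl.
  move=> v _; rewrite hp eq_sym; case: (gv v == gv u) => /=; ring.
- rewrite /pccp_agr (eq_bigr (fun u => t%:R)).
    rewrite sumr_const card_ord -mulr_natr hn natrX natrM; field.
    by rewrite kR tR.
  move=> u _.
  rewrite (eq_bigr (fun v => (gv v == gv u)%:R)); first by rewrite sum_ind hvt.
  move=> v _; rewrite hp eq_sym; case: (gv v == gv u) => /=.
    by rewrite max_r ?ler01.
  by rewrite max_l // oppr_le0 ltW.
Qed.
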